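(* Let $p$ be a prime, let $G$ be a finite $p$-solvable group and let $P$ be a Sylow $p$-subgroup of $G$. If $P$ is abelian and $N_G(P)$ is $p$-supersolvable, then $G$ is $p$-supersolvable.
   Context: All groups are finite. A group is $p$-supersolvable if every chief factor of order divisible by $p$ is cyclic (of order $p$). *)

(* Defs.v *)
From mathcomp Require Import all_boot all_fingroup all_solvable.
Set Implicit Arguments. Unset Strict Implicit. Unset Printing Implicit Defensive.
Local Open Scope group_scope.

(* The series is encoded as a list s = [:: G_1; ...; G_n] read bottom-up
   from 1, with last element G. *)
Definition p_solvable (gT : finGroupType) (p : nat) (G : {group gT}) : Prop :=
  exists s : seq {group gT},
    last 1%G s = G /\
    path (fun H K : {group gT} =>
            (H <| K) && (p.-group (K / H) || p^'.-group (K / H))) 1%G s.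

Definition p_supersolvable (gT : finGroupType) (p : nat) (G : {group gT}) : Prop :=
  forall U V : {group gT}, chief_factor G V U ->
    p %| #|U / V| -> #|U / V| = p.

(* Main.v *)
Require Import Defs.
From mathcomp Require Import all_boot all_fingroup all_solvable.
Set Implicit Arguments. Unset Strict Implicit. Unset Printing Implicit Defensive.
Local Open Scope group_scope.
Definition psrel (gT : finGroupType) (p : nat) := (fun H K : {group gT} =>
            (H <| K) && (p.-group (K / H) || p^'.-group (K / H))).
Lemma subnormal_pcore (gT : finGroupType) (pi : nat_pred) (G H : {group gT}) :
  pi.-group H -> H <|<| G -> H \subset 'O_pi(G).
Proof.
move=> piH; have [m] := ubnP #|G|; elim: m G => // m IHm G leGm snHG.
have [defH | [K [snHK nsKG prKG]]] := subnormalEr snHG.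
  by rewrite defH pcore_pgroup_id // -defH.
apply: subset_trans (IHm K _ snHK) _.
  by apply: leq_trans (proper_card prKG) _.
apply: pcore_max; first exact: pcore_pgroup.
exact: char_normal_trans (pcore_char _ _) nsKG.
Qed.


Lemma psolv_minnormal (gT : finGroupType) (p : nat) (G M : {group gT}) (s : seq {group gT}) :
  last 1%G s = G -> path (@psrel gT p) 1%G s -> minnormal M G -> M \subset G ->
  p.-group M \/ p^'.-group M.
Proof.
move=> defG pth minM sMG.
have nMG : G \subset 'N(M) by case/mingroupp/andP: minM.
suff: forall (H : {group gT}) t, path (@psrel gT p) H t -> last H t = G ->
    M :&: H = 1 -> p.-group M \/ p^'.-group M.
  by move/(_ 1%G s pth defG); apply; rewrite setIg1.
move=> H t; elim: t H => [|K t IHt] H /=.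
  move=> _ -> tiM; left; rewrite -(setIidPl sMG) tiM; exact: pgroup1.
case/andP=> /andP[nsHK piKH] pth' defG' tiMH.
have [tiMK | ntA] := eqVneq (M :&: K) 1; first exact: IHt pth' defG' tiMK.
have snKG : K <|<| G.
  apply/subnormalP; exists t => //.
  apply: sub_path pth' => X Y /andP[] //.
have sKG : K \subset G by apply: subnormal_sub.
have nsAK : M :&: K <| K by rewrite /normal subsetIr normsI ?normG // (subset_trans sKG).
have snAG : M :&: K <|<| G := subnormal_trans (normal_subnormal nsAK) snKG.
have [sHK nHK] := andP nsHK.
have tiAH : H :&: (M :&: K) = 1.
  by rewrite setIC -setIA (setIidPr sHK).
have isoA : (M :&: K)%G \isog (M :&: K)%G / H.
  apply: quotient_isog => //; exact: subset_trans (subsetIr _ _) nHK.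
have sAKH : (M :&: K) / H \subset K / H by apply: quotientS; apply: subsetIr.
suff gen: forall pi : nat_pred, pi.-group (K / H) -> pi.-group M.
  by case/orP: piKH => /gen; [left | right].
move=> pi piK.
have piA : pi.-group (M :&: K).
  by rewrite (isog_pgroup _ isoA); apply: pgroupS sAKH piK.
have sAO := subnormal_pcore piA snAG.
have nsOG : 'O_pi(G) <| G by apply: pcore_normal.
have nsMG : M <| G by rewrite /normal sMG nMG.
have : M :&: 'O_pi(G) = M.
  apply: (mingroupP minM).2 (subsetIl _ _).
  apply/andP; split; last by rewrite normsI // normal_norm.
  apply: contra ntA => /eqP triv; apply/eqP; apply/trivgP.
  by rewrite -triv subsetI subsetIl.
move=> eqM; apply: pgroupS (pcore_pgroup pi G); by rewrite -eqM subsetIr.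
Qed.

Lemma path_sub_last (gT : finGroupType) p (H : {group gT}) t :
  path (@psrel gT p) H t -> H \subset last H t.
Proof.
elim: t H => [|K t IHt] H /=; first by rewrite subxx.
case/andP=> /andP[/andP[sHK _] _] /IHt; exact: subset_trans.
Qed.

Lemma pgroup_quo (gT : finGroupType) (pi : nat_pred) (H K V : {group gT}) :
  H <| K -> K \subset 'N(V) -> pi.-group (K / H) -> pi.-group ((K / V) / (H / V)).
Proof.
move=> nsHK nVK piK.
have [sHK nHK] := andP nsHK.
rewrite /pgroup card_quotient; last by apply: quotient_norms.
apply: (pnat_dvd (index_quotient (subset_trans (subsetIl _ _) nVK))).
by move: piK; rewrite /pgroup card_quotient.
Qed.

Lemma psolv_quo (gT : finGroupType) p (G V : {group gT}) s :
  last 1%G s = G -> path (@psrel gT p) 1%G s -> G \subset 'N(V) ->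
  exists s' : seq {group coset_of V}, last 1%G s' = (G / V)%G /\ path (@psrel _ p) 1%G s'.
Proof.
move=> defG pth nVG.
suff: forall (H : {group gT}) t, path (@psrel gT p) H t -> last H t \subset 'N(V) ->
    path (@psrel _ p) (H / V)%G [seq (X / V)%G | X <- t] /\
    last (H / V)%G [seq (X / V)%G | X <- t] = (last H t / V)%G.
  case/(_ 1%G s pth); first by rewrite defG.
  have ->: (1 / V)%G = 1%G by apply: val_inj; rewrite /= quotient1.
  by move=> pth' eql; exists [seq (X / V)%G | X <- s]; rewrite eql defG.
move=> H t; elim: t H => [|K t IHt] H //=.
case/andP=> /andP[nsHK piKH] pth' nVl.
have [pthK eqK] := IHt K pth' nVl.
split=> //; rewrite pthK andbT.
have nVK : K \subset 'N(V) := subset_trans (path_sub_last pth') nVl.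
rewrite /psrel /= quotient_normal //.
by case/orP: piKH => /(pgroup_quo nsHK nVK) ->; rewrite ?orbT.
Qed.

Unset Implicit Arguments.
Theorem mainTheorem2 (gT : finGroupType) (p : nat) (G P : {group gT}) :
  prime p -> p_solvable p G -> P \in 'Syl_p(G) -> abelian P ->
  p_supersolvable p 'N_G(P)%G -> p_supersolvable p G.
Proof.
move=> pr_p [s [defs pths]] sylP abP ssN U V chief p_dv.
have sylP' : p.-Sylow(G) P by rewrite inE in sylP.
have [sPG _ _] := and3P sylP'.
have /andP[maxV nsUG] := chief.
have /andP[prVU nVG] := maxgroupp maxV.
have sVU := proper_sub prVU.
have [sUG nUG] := andP nsUG.
have nsVG : V <| G by rewrite /normal (subset_trans sVU sUG) nVG.
have [s' [defs' pths']] := psolv_quo defs pths nVG.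
have minUV := chief_factor_minnormal chief.
have pUV : p.-group (U / V).
  have [//|p'UV] := psolv_minnormal defs' pths' minUV (quotientS _ sUG).
  have : p^'.-nat p by apply: pnat_dvd p_dv p'UV.
  by rewrite pnatE //; case/negP; rewrite /in_mem /=.
have nVP := subset_trans sPG nVG.
have sylPV : p.-Sylow(G / V) (P / V) by apply: quotient_pHall.
have nsUVG : U / V <| G / V by apply: quotient_normal.
have sUPV : U / V \subset P / V.
  apply: subset_trans (pcore_sub_Hall sylPV).
  exact: pcore_max.
pose Cb := 'C_(G / V)(U / V).
pose C := (coset V @*^-1 Cb)%G.
have sCG : C \subset G.
  by rewrite -(quotientGK nsVG) morphpreS // subsetIl.
have nVC := subset_trans sCG nVG.
have sPC : P \subset C.
  rewrite -sub_quotient_pre // subsetI quotientS //=.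
  apply: subset_trans (centS sUPV).
  exact: quotient_abelian.
have nsCG : C <| G.
  rewrite /normal sCG /=.
  apply: subset_trans (morphpre_norm _ _).
  rewrite -sub_quotient_pre //.
  by rewrite normsI ?normG ?norms_cent ?quotient_norms.
have sylPC : p.-Sylow(C) P by apply: pHall_subl sylP'.
have defG := Frattini_arg nsCG sylPC.
set N := 'N_G(P) in defG *.
have sNG : N \subset G by apply: subsetIl.
have sPN : P \subset N by rewrite subsetI sPG normG.
have nVN := subset_trans sNG nVG.
pose U' := (U :&: N)%G.
pose V' := (V :&: N)%G.
have sU'U : U' \subset U by apply: subsetIl.
have sU'N : U' \subset N by apply: subsetIr.
have sV'U' : V' \subset U' by apply: setSI.
have sUVP : U \subset V * P by rewrite -quotientSK // (subset_trans sUG nVG).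
have defU : V * U' = U.
  apply/eqP; rewrite eqEsubset mul_subG //=.
  rewrite -{1}(setIidPr sUVP).
  rewrite -(group_modl _ sVU); apply: mulgS; rewrite setIC.
  exact: setIS.
have VU' : V :&: U' = V' by rewrite /= setIA (setIidPl sVU).
have cardE : (#|V| * #|U'| = #|U| * #|V'|)%N.
  by rewrite mul_cardG defU VU'.
have nVU : U \subset 'N(V) := subset_trans sUG nVG.
have nV'U' : U' \subset 'N(V').
  by rewrite normsI ?(subset_trans sU'U nVU) // (subset_trans sU'N) ?normG.
have idxE : #|U' / V'| = #|U / V|.
  rewrite !card_quotient //.
  have := Lagrange sVU; have := Lagrange sV'U'.
  move: cardE; set a := #|V|; set b := #|V'|; set x := #|U : V|; set y := #|U' : V'|.
  move=> cE eU' eU; rewrite -eU' -eU in cE.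
  have a0 : 0 < a by apply: cardG_gt0.
  have b0 : 0 < b by apply: cardG_gt0.
  apply/eqP; rewrite -(@eqn_pmul2l (a * b)) ?muln_gt0 ?a0 //; apply/eqP.
  by rewrite -mulnA cE mulnAC.
have nV'N : N \subset 'N(V') by rewrite normsI ?normG.
have nsU'N : U' <| N by rewrite /= setIC; apply: (normalGI sNG nsUG).
have p_gt1 := prime_gt1 pr_p.
have prV'U' : V' \proper U'.
  rewrite properEcard sV'U' /=.
  have := Lagrange sV'U'; rewrite -card_quotient // idxE => <-.
  rewrite -[X in X < _]muln1 ltn_pmul2l ?cardG_gt0 //.
  apply: leq_trans p_gt1 (dvdn_leq _ p_dv).
  by rewrite cardG_gt0.
have chiefN : chief_factor N V' U'.
  rewrite /chief_factor nsU'N andbT.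
  apply/maxgroupP; split; first by rewrite prV'U' nV'N.
  move=> W /andP[prWU' nWN] sV'W.
  have sWU' := proper_sub prWU'.
  have sWU := subset_trans sWU' sU'U.
  have sWN := subset_trans sWU' sU'N.
  have nVW := subset_trans sWU nVU.
  pose X := (W <*> V)%G.
  have defX : (X : {set gT}) = W * V by rewrite /= norm_joinEl.
  have sXU : X \subset U by rewrite join_subG sWU sVU.
  have sVX : V \subset X by apply: joing_subr.
  have nsVX : V <| X by rewrite /normal sVX (subset_trans sXU nVU).
  have nXG : G \subset 'N(X).
    rewrite -defG mul_subG //.
      have h : C \subset coset V @*^-1 'N(X / V).
        rewrite -sub_quotient_pre // cosetpreK.
        apply: subset_trans (subsetIr _ _) _.
        apply: subset_trans (cent_sub _).
        by apply: centS; apply: quotientS.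
      rewrite -(quotientGK nsVX).
      exact: subset_trans h (morphpre_norm _ _).
    by rewrite defX normsM.
  have [eqXU | neXU] := eqVneq (X : {set gT}) U.
    case/andP: prWU' => _; case/negP.
    rewrite /= -eqXU defX -group_modl //.
    by rewrite mulGSid.
  have prXU : X \proper U by rewrite properEneq neXU sXU.
  have eqXV := (maxgroupP maxV).2 X (introT andP (conj prXU nXG)) sVX.
  apply/eqP; rewrite eq_sym eqEsubset sV'W /=.
  by rewrite subsetI sWN -eqXV joing_subl.
move: (ssN _ _ chiefN); rewrite idxE; exact.
Qed.
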